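(* Let $\kappa$ be a regular infinite cardinal, let $\mathscr{F},\mathscr{G}\subseteq[\kappa]^\kappa$, and let $\Pi=\{I_\alpha:\alpha<\kappa\}$ be an interval partition of $\kappa$. Then at least one of the following holds: (a) $\mathscr{F}$ is $\Pi$-scattered; (b) $\Pi$ is $\mathscr{G}$-scattered; (c) there exist $y\in\mathscr{F}$ and a non-decreasing function $h:\kappa\to\kappa$ such that $|h^{-1}(\{\alpha\})|<\kappa$ for every $\alpha<\kappa$, and the family $\{h[y\cap z]:z\in\mathscr{G}\}$ is unreaped.
   Context: For a regular cardinal $\kappa$, an interval partition of $\kappa$ is a family $\Pi=\{I_\alpha:\alpha<\kappa\}$ of pairwise disjoint non-empty intervals $I_\alpha=[\gamma_\alpha,\gamma_{\alpha+1})$ whose union is $\kappa$. A pair $(D,E)$ is a nice $\Pi$-orbit if each of $D$ and $E$ is a union of $\kappa$-many intervals of $\Pi$, no interval of $\Pi$ is contained in both, and no interval of $\Pi$ contained in $D$ is adjacent (i.e. of the form $I_\alpha,I_{\alpha+1}$ in either order) to an interval of $\Pi$ contained in $E$. A family $\mathscr{F}\subseteq[\kappa]^\kappa$ is $\Pi$-scattered if for every nice $\Pi$-orbit $(D,E)$ and every $y\in\mathscr{F}$, $|y\cap D|=|y\cap E|=\kappa$. $\Pi$ is $\mathscr{G}$-scattered if there exists a nice $\Pi$-orbit $(D,E)$ such that $|z\cap D|=|z\cap E|=\kappa$ for every $z\in\mathscr{G}$. A set $S\subseteq\kappa$ splits $B\subseteq\kappa$ if $|S\cap B|=|B\setminus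 S|=\kappa$. A family $\mathcal{A}$ of subsets of $\kappa$ is unreaped (an $\mathfrak{r}_\kappa$-family) if there is no $S\in[\kappa]^\kappa$ which splits every member of $\mathcal{A}$. $h[X]$ denotes the pointwise image $\{h(x):x\in X\}$. *)

(* Defs.v *)
(* A regular infinite cardinal kappa is represented by a type K
   (its set of elements = ordinals below kappa) with a strict well-order lt
   that is an initial ordinal, infinite and regular. *)
From Stdlib Require Import Classical.
Set Implicit Arguments.

Section Defs.
Variable K : Type.
Variable lt : K -> K -> Prop.

Definition le (a b : K) : Prop := lt a b \/ a = b.

(* |X| = kappa  (for X a subset of kappa: kappa injects into X) *)
Definition size_kappa (X : K -> Prop) : Prop :=
  exists f : K -> K, (forall a b, f a = f b -> a = b) /\ (forall a, X (f a)).

Definition small (X : K -> Prop) : Prop := ~ size_kappa X.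

Definition inter (X Y : K -> Prop) : K -> Prop := fun x => X x /\ Y x.
Definition diff (X Y : K -> Prop) : K -> Prop := fun x => X x /\ ~ Y x.
Definition subset (X Y : K -> Prop) : Prop := forall x, X x -> Y x.

Definition regular_infinite_cardinal : Prop :=
  (forall a, ~ lt a a) /\
  (forall a b c, lt a b -> lt b c -> lt a c) /\
  (forall a b, lt a b \/ a = b \/ lt b a) /\
  well_founded lt /\
  (exists g : nat -> K, forall m n, g m = g n -> m = n) /\
  (* a cardinal (initial ordinal): every proper initial segment has size < kappa *)
  (forall x, small (fun y => lt y x)) /\
  (* regular: every subset of size < kappa is bounded *)
  (forall X, small X -> exists b, forall x, X x -> lt x b).

Definition is_succ (a b : K) : Prop :=
  lt a b /\ forall c, lt a c -> lt c b -> False.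

Definition is_interval (X : K -> Prop) : Prop :=
  forall x y z, X x -> X z -> lt x y -> lt y z -> X y.

(* Pi = {I_alpha : alpha < kappa} is an interval partition of kappa;
   I alpha is the set I_alpha, listed in increasing order (I_alpha =
   [gamma_alpha, gamma_(alpha+1)) with gamma increasing). *)
Definition interval_partition (I : K -> K -> Prop) : Prop :=
  (forall a, exists x, I a x) /\
  (forall a, is_interval (I a)) /\
  (forall a b x, I a x -> I b x -> a = b) /\
  (forall x, exists a, I a x) /\
  (forall a b x y, lt a b -> I a x -> I b y -> lt x y).

Definition union_of_kappa_intervals (I : K -> K -> Prop) (D : K -> Prop) : Prop :=
  exists A : K -> Prop, size_kappa A /\
    (forall x, D x <-> exists a, A a /\ I a x).

Definition nice_orbit (I : K -> K -> Prop) (D E : K -> Prop) : Prop :=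
  union_of_kappa_intervals I D /\ union_of_kappa_intervals I E /\
  (forall a, ~ (subset (I a) D /\ subset (I a) E)) /\
  (forall a b, is_succ a b ->
     ~ (subset (I a) D /\ subset (I b) E) /\
     ~ (subset (I b) D /\ subset (I a) E)).

Definition Pi_scattered (I : K -> K -> Prop) (F : (K -> Prop) -> Prop) : Prop :=
  forall D E, nice_orbit I D E ->
    forall y, F y -> size_kappa (inter y D) /\ size_kappa (inter y E).

Definition partition_G_scattered (I : K -> K -> Prop) (G : (K -> Prop) -> Prop) : Prop :=
  exists D E, nice_orbit I D E /\
    forall z, G z -> size_kappa (inter z D) /\ size_kappa (inter z E).

Definition splits (S B : K -> Prop) : Prop :=
  size_kappa (inter S B) /\ size_kappa (diff B S).

Definition unreaped (A : (K -> Prop) -> Prop) : Prop :=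
  ~ exists S, size_kappa S /\ forall B, A B -> splits S B.

Definition image (h : K -> K) (X : K -> Prop) : K -> Prop :=
  fun w => exists x, X x /\ h x = w.

End Defs.

(* Main.v *)
Require Import Defs.
From Stdlib Require Import Classical ClassicalEpsilon Lia.

Lemma choice_fun {A B : Type} (R : A -> B -> Prop) :
  (forall a, exists b, R a b) -> exists f : A -> B, forall a, R a (f a).
Proof.
  intro H.
  exists (fun a => proj1_sig (constructive_indefinite_description _ (H a))).
  intro a. exact (proj2_sig (constructive_indefinite_description _ (H a))).
Qed.

Section L.
Context {K : Type} {lt : K -> K -> Prop} (Hk : regular_infinite_cardinal lt).

Lemma ub_of_size (X : K -> Prop) : size_kappa X -> forall b, exists x, X x /\ ~ lt x b.
Proof.
  intros [g [gi gX]] b. destruct Hk as (_&_&_&_&_&Hcard&_).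
  apply NNPP; intro H. apply (Hcard b). exists g. split; auto. intro a.
  specialize (gX a). apply NNPP; intro H2. apply H. exists (g a). split; auto.
Qed.

Lemma size_of_ub (X : K -> Prop) : (forall b, exists x, X x /\ ~ lt x b) -> size_kappa X.
Proof.
  intros H. destruct Hk as (_&_&_&_&_&_&Hreg). apply NNPP; intro Hs.
  destruct (Hreg X Hs) as [b Hb]. destruct (H b) as [x [Hx Hnx]]. apply Hnx, Hb, Hx.
Qed.

Lemma no_max : forall a, exists b, lt a b.
Proof.
  intro a. destruct Hk as (Hirr&Htr&Htot&Hwf&[g Hg]&Hcard&Hreg).
  apply NNPP; intro Hno.
  assert (Hall : forall y, y <> a -> lt y a).
  { intros y Hy. destruct (Htot y a) as [h|[h|h]]; auto. congruence.
    exfalso; apply Hno; eauto. }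
  assert (Hg2 : exists g2 : nat -> K, (forall m n, g2 m = g2 n -> m = n) /\ g2 0 = a).
  { destruct (classic (exists m, g m = a)) as [[m Hm]|Hnm].
    - exists (fun n => g (n + m)). split. intros p q H. apply Hg in H. lia. simpl. exact Hm.
    - exists (fun n => match n with 0 => a | S k => g k end). split.
      + intros [|p] [|q] H; auto; try (exfalso; apply Hnm; eauto; fail).
        all: f_equal; apply Hg; auto.
      + reflexivity. }
  destruct Hg2 as [g2 [Hg2i Hg20]].
  assert (Hphi: exists phi : K -> K, forall x, (exists n, x = g2 n /\ phi x = g2 (S n)) \/ ((forall n, x <> g2 n) /\ phi x = x)).
  { apply (choice_fun (fun x y => (exists n, x = g2 n /\ y = g2 (S n)) \/ ((forall n, x <> g2 n) /\ y = x))).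
    intro x. destruct (classic (exists n, x = g2 n)) as [[n Hn]|Hn].
    exists (g2 (S n)); left; eauto. exists x; right; split; auto. intros n E; apply Hn; eauto. }
  destruct Hphi as [phi Hphi].
  apply (Hcard a). exists phi. split.
  - intros x y Hxy. destruct (Hphi x) as [[n [Hxn Hpx]]|[Hx Hpx]];
      destruct (Hphi y) as [[m [Hym Hpy]]|[Hy Hpy]].
    + rewrite Hpx, Hpy in Hxy. apply Hg2i in Hxy. injection Hxy; intro; subst; reflexivity.
    + exfalso. apply (Hy (S n)). congruence.
    + exfalso. apply (Hx (S m)). congruence.
    + congruence.
  - intro x. apply Hall. intro Hx. destruct (Hphi x) as [[n [_ Hpx]]|[Hx2 Hpx]].
    + rewrite Hpx, <- Hg20 in Hx. apply Hg2i in Hx. discriminate.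
    + apply (Hx2 0). congruence.
Qed.

Lemma least (P : K -> Prop) m0 : P m0 -> exists m, P m /\ forall x, P x -> ~ lt x m.
Proof.
  destruct Hk as (_&_&_&Hwf&_).
  revert m0. apply (well_founded_ind Hwf (fun m0 => P m0 -> exists m, P m /\ forall x, P x -> ~ lt x m)).
  intros m0 IH Hm0. destruct (classic (exists x, P x /\ lt x m0)) as [[x [Px Hx]]|Hn].
  - apply (IH x Hx Px).
  - exists m0; split; auto. intros x Px Hx; apply Hn; eauto.
Qed.

Lemma le_trans' a b c : le lt a b -> le lt b c -> le lt a c.
Proof. destruct Hk as (_&Htr&_). intros [h|h] [h'|h']; subst; unfold le; eauto. Qed.
Lemma le_lt_trans a b c : le lt a b -> lt b c -> lt a c.
Proof. destruct Hk as (_&Htr&_). intros [h|h] h'; subst; eauto. Qed.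
Lemma lt_le_trans a b c : lt a b -> le lt b c -> lt a c.
Proof. destruct Hk as (_&Htr&_). intros h [h'|h']; subst; eauto. Qed.
Lemma le_not_lt a b : le lt a b -> ~ lt b a.
Proof. destruct Hk as (Hirr&Htr&_). intros [h|h] h'; subst.
  apply (Hirr a); eauto. apply (Hirr b); auto. Qed.
Lemma not_lt_le a b : ~ lt a b -> le lt b a.
Proof. destruct Hk as (_&_&Htot&_). intros h. destruct (Htot a b) as [h'|[h'|h']].
  contradiction. right; auto. left; auto. Qed.
Lemma le_antisym a b : le lt a b -> le lt b a -> a = b.
Proof. destruct Hk as (Hirr&Htr&_). intros [h|h] [h'|h']; subst; auto.
  exfalso; eapply Hirr; eauto. Qed.
Lemma le_refl a : le lt a a.
Proof. right; auto. Qed.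

End L.

Lemma nice_sym {K} (lt : K -> K -> Prop) I D E : nice_orbit lt I D E -> nice_orbit lt I E D.
Proof.
  intros (H1&H2&H3&H4). split; [|split; [|split]]; auto.
  - intros a [h1 h2]; apply (H3 a); auto.
  - intros a b Hab. destruct (H4 a b Hab) as [h1 h2]. split; intros [x y]; eauto.
Qed.

Lemma main {K} (lt : K -> K -> Prop) (Hk : regular_infinite_cardinal lt)
  (F G : (K -> Prop) -> Prop) (I : K -> K -> Prop) (HI : interval_partition lt I)
  D E y (Hnice : nice_orbit lt I D E) (Fy : F y) (HyE : ~ size_kappa (inter y E))
  (HnotB : ~ partition_G_scattered lt I G) :
  exists y (h : K -> K), F y /\
     (forall a b, le lt a b -> le lt (h a) (h b)) /\
     (forall a, small (fun x => h x = a)) /\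
     unreaped (fun B => exists z, G z /\ B = image h (inter y z)).
Proof.
  pose proof Hk as Hk'. destruct Hk' as (Hirr&Htr&Htot&Hwf&_&_&Hreg).
  pose proof HI as HI'. destruct HI' as (HIne&HIint&HIdisj&HIcov&HIord).
  destruct (choice_fun (fun x a => I a x) HIcov) as [f Hf].
  assert (Hfu : forall a x, I a x -> f x = a) by (intros a x h; exact (HIdisj _ _ _ (Hf x) h)).
  assert (Hfmono : forall x x', le lt x x' -> le lt (f x) (f x')).
  { intros x x' Hle. apply (not_lt_le Hk). intro h.
    pose proof (HIord _ _ _ _ h (Hf x') (Hf x)) as H'. exact (le_not_lt Hk _ _ Hle H'). }
  assert (Hlater : forall a, exists p, forall x, le lt (f x) a -> lt x p).
  { intro a. destruct (no_max Hk a) as [b Hb]. destruct (HIne b) as [p Hp]. exists p.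
    intros x Hx. apply (HIord _ _ _ _ (le_lt_trans Hk _ _ _ Hx Hb) (Hf x) Hp). }
  pose proof Hnice as Hnice'. destruct Hnice' as (_ & [A [HA HEA]] & _ & _).
  pose proof (ub_of_size Hk _ HA) as HAub.
  assert (HB : exists B : K -> K, forall al, A (B al) /\ le lt al (B al) /\
             forall a, A a -> le lt al a -> le lt (B al) a).
  { apply (choice_fun (fun al b => A b /\ le lt al b /\ forall a, A a -> le lt al a -> le lt b a)). intro al. destruct (HAub al) as [a0 [Ha0 Hna0]].
    destruct (least Hk (fun a => A a /\ ~ lt a al) a0 (conj Ha0 Hna0)) as [m [[Hm1 Hm2] Hmin]].
    exists m. split; [exact Hm1|split].
    - apply (not_lt_le Hk); auto.
    - intros a Ha Hle. apply (not_lt_le Hk). intro h. apply (Hmin a); auto. split; auto.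
      apply (le_not_lt Hk); auto. }
  destruct HB as [B HB].
  assert (Hhmono : forall a b, le lt a b -> le lt (B (f a)) (B (f b))).
  { intros a b Hab. destruct (HB (f b)) as (HB1&HB2&_). destruct (HB (f a)) as (_&_&HB3).
    apply HB3; auto. apply (le_trans' Hk) with (f b); auto. }
  assert (Badj : forall a b, is_succ lt a b -> ~ A a -> B a = B b).
  { intros a b [Hab Hs] HnA. destruct (HB a) as (Ha1&Ha2&Ha3). destruct (HB b) as (Hb1&Hb2&Hb3).
    assert (Hlt : lt a (B a)). { destruct Ha2 as [h|h]; auto. rewrite h in HnA; contradiction. }
    assert (Hle : le lt b (B a)). { apply (not_lt_le Hk). intro h. apply (Hs (B a)); auto. }
    apply (le_antisym Hk).
    - apply Ha3; auto. left. apply (lt_le_trans Hk) with b; auto.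
    - apply Hb3; auto. }
  exists y, (fun x => B (f x)). split; [exact Fy|split; [exact Hhmono|split]].
  - intros a Hs. destruct (Hlater a) as [p Hp]. destruct (ub_of_size Hk _ Hs p) as [x [Hx Hnx]].
    apply Hnx, Hp. rewrite <- Hx. apply HB.
  - intros [S [HS Hsp]]. apply HnotB.
    destruct (classic (exists z, G z)) as [[z0 Hz0]|Hnz].
    2: { exists D, E. split; auto. intros z Hz; exfalso; eauto. }
    destruct (Hreg _ HyE) as [e He].
    assert (Claim : forall z (U : K -> Prop), G z ->
      (forall b, exists w, U w /\ image (fun x => B (f x)) (inter y z) w /\ ~ lt w b) ->
      forall c, exists x, z x /\ (~ A (f x) /\ U (B (f x))) /\ ~ lt x c).
    { intros z U Hz HU c.
      assert (Hm : exists m, le lt c m /\ le lt e m).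
      { destruct (Htot c e) as [h|[h|h]].
        - exists e; split; [left; auto| right; auto].
        - exists e; split; [right; auto| right; auto].
        - exists c; split; [right; auto| left; auto]. }
      destruct Hm as [m [Hcm Hem]].
      destruct (no_max Hk (B (f m))) as [b Hb].
      destruct (HU b) as [w [HUw [[x [[Hyx Hzx] Hxw]] Hnw]]].
      assert (Hxm : ~ lt x m).
      { intro Hxm. apply Hnw. rewrite <- Hxw. apply (le_lt_trans Hk) with (B (f m)); auto.
        apply Hhmono; left; auto. }
      exists x. split; auto. split; [split|].
      - intro HA'. apply Hxm. assert (HEx : E x) by (apply HEA; exists (f x); auto).
        apply (lt_le_trans Hk) with e; auto. apply He. split; auto.
      - rewrite Hxw; auto.
      - intro Hxc. apply Hxm. apply (lt_le_trans Hk) with c; auto. }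
    assert (HsplitS : forall z, G z -> forall b, exists w, S w /\ image (fun x => B (f x)) (inter y z) w /\ ~ lt w b).
    { intros z Hz b. destruct (Hsp _ (ex_intro _ z (conj Hz eq_refl))) as [H1 _].
      destruct (ub_of_size Hk _ H1 b) as [w [[h1 h2] h3]]. eauto. }
    assert (HsplitN : forall z, G z -> forall b, exists w, ~ S w /\ image (fun x => B (f x)) (inter y z) w /\ ~ lt w b).
    { intros z Hz b. destruct (Hsp _ (ex_intro _ z (conj Hz eq_refl))) as [_ H1].
      destruct (ub_of_size Hk _ H1 b) as [w [[h1 h2] h3]]. eauto. }
    assert (Hunion : forall U : K -> Prop,
      (forall c, exists x, (~ A (f x) /\ U (B (f x))) /\ ~ lt x c) ->
      union_of_kappa_intervals I (fun x => ~ A (f x) /\ U (B (f x)))).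
    { intros U HU. exists (fun al => ~ A al /\ U (B al)). split.
      - apply (size_of_ub Hk). intro b. destruct (HIne b) as [p Hp].
        destruct (HU p) as [x [Hx Hnx]]. exists (f x). split; auto.
        intro h. apply Hnx. exact (HIord _ _ _ _ h (Hf x) Hp).
      - intro x. split.
        + intro h. exists (f x); auto.
        + intros [al [h1 h2]]. rewrite (Hfu _ _ h2). auto. }
    exists (fun x => ~ A (f x) /\ S (B (f x))), (fun x => ~ A (f x) /\ ~ S (B (f x))).
    split; [split; [|split; [|split]]|].
    + apply Hunion. intro c. destruct (Claim z0 S Hz0 (HsplitS z0 Hz0) c) as [x [_ h]]. eauto.
    + apply (Hunion (fun w => ~ S w)). intro c. destruct (Claim z0 (fun w => ~ S w) Hz0 (HsplitN z0 Hz0) c) as [x [_ h]]. eauto.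
    + intros a [h1 h2]. destruct (HIne a) as [x Hx]. destruct (h1 x Hx) as [_ h3].
      destruct (h2 x Hx) as [_ h4]. contradiction.
    + intros a b Hab. destruct (HIne a) as [xa Ha]. destruct (HIne b) as [xb Hb].
      split; intros [h1 h2].
      * destruct (h1 xa Ha) as [n1 s1]. destruct (h2 xb Hb) as [n2 s2].
        rewrite (Hfu _ _ Ha), (Hfu _ _ Hb) in *. rewrite (Badj a b Hab n1) in s1. contradiction.
      * destruct (h1 xb Hb) as [n1 s1]. destruct (h2 xa Ha) as [n2 s2].
        rewrite (Hfu _ _ Ha), (Hfu _ _ Hb) in *. rewrite (Badj a b Hab n2) in s2. contradiction.
    + intros z Hz. split; apply (size_of_ub Hk); intro c.
      * destruct (Claim z S Hz (HsplitS z Hz) c) as [x [h1 [h2 h3]]]. exists x. split; auto. split; auto.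
      * destruct (Claim z (fun w => ~ S w) Hz (HsplitN z Hz) c) as [x [h1 [h2 h3]]]. exists x. split; auto. split; auto.
Qed.

Theorem theorem2p6 (K : Type) (lt : K -> K -> Prop)
  (Hkappa : regular_infinite_cardinal lt)
  (F G : (K -> Prop) -> Prop)
  (HF : forall y, F y -> size_kappa y)
  (HG : forall z, G z -> size_kappa z)
  (I : K -> K -> Prop) (HI : interval_partition lt I) :
  Pi_scattered lt I F \/
  partition_G_scattered lt I G \/
  (exists y (h : K -> K), F y /\
     (forall a b, le lt a b -> le lt (h a) (h b)) /\
     (forall a, small (fun x => h x = a)) /\
     unreaped (fun B => exists z, G z /\ B = image h (inter y z))).
Proof.
  destruct (classic (Pi_scattered lt I F)) as [Ha|Ha]; [left; exact Ha|right].
  destruct (classic (partition_G_scattered lt I G)) as [Hb|Hb]; [left; exact Hb|right].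
  unfold Pi_scattered in Ha.
  apply not_all_ex_not in Ha. destruct Ha as [D Ha].
  apply not_all_ex_not in Ha. destruct Ha as [E Ha].
  apply imply_to_and in Ha. destruct Ha as [Hn Ha].
  apply not_all_ex_not in Ha. destruct Ha as [y Ha].
  apply imply_to_and in Ha. destruct Ha as [Fy Ha].
  destruct (classic (size_kappa (inter y E))) as [HyE|HyE].
  - assert (HyD : ~ size_kappa (inter y D)) by (intro h; apply Ha; split; auto).
    exact (main lt Hkappa F G I HI E D y (nice_sym _ _ _ _ Hn) Fy HyD Hb).
  - exact (main lt Hkappa F G I HI D E y Hn Fy HyE Hb).
Qed.
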